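(* Let $(X,T)$ be a dynamical system and $\mathcal{F}$ a family admitting a countable base. Then $\mathrm{Tran}_{k\mathcal{F}}(X,T)$ is a $G_\delta$ subset of $X$. Moreover, the following are equivalent: (1) $(X,T)$ is $k\mathcal{F}$-transitive; (2) $\mathrm{Tran}_{k\mathcal{F}}(X,T)$ is a dense $G_\delta$ subset of $X$; (3) $\mathrm{Tran}_{k\mathcal{F}}(X,T)\neq\varnothing$.
   Context: A dynamical system $(X,T)$: $X$ is a compact metric space with more than one point and without isolated points, $T:X\to X$ a continuous surjection. A family is a collection of subsets of $\mathbb{Z}_+$ that is hereditary upward. A countable base of $\mathcal{F}$ is a countable $\mathcal{H}\subset\mathcal{F}$ such that every $F\in\mathcal{F}$ contains some $H\in\mathcal{H}$. The dual family is $k\mathcal{F}=\{F\subset\mathbb{Z}_+:F\cap F'\neq\varnothing\ \forall F'\in\mathcal{F}\}$. ''Opene'' means open and nonempty. $n_T(x,U)=\{n\in\mathbb{Z}_+:T^nx\in U\}$, $N_T(U,V)=\{n\in\mathbb{Z}_+:U\cap T^{-n}V\neq\varnothing\}$. For a family $\mathcal{G}$, $\mathrm{Tran}_{\mathcal{G}}(X,T)=\{x\in X:n_T(x,U)\in\mathcal{G}\text{ for every opene }U\}$, and $(X,T)$ is $\mathcal{G}$-transitive if $N_T(U,V)\in\mathcal{G}$ for all opene $U,V$. *)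

(* Defs.v *)
From HB Require Import structures.
From mathcomp Require Import all_boot all_order all_algebra.
From mathcomp Require Import all_classical all_reals.
From mathcomp Require Import topology normedtype borel_hierarchy.
Set Implicit Arguments. Unset Strict Implicit. Unset Printing Implicit Defensive.
Import Order.TTheory GRing.Theory Num.Theory.
Local Open Scope classical_set_scope.

(* Z_+ = {0,1,2,...} is modelled by nat. *)

Definition is_family (F : set (set nat)) : Prop :=
  forall A B : set nat, A `<=` B -> F A -> F B.

Definition has_countable_base (F : set (set nat)) : Prop :=
  exists H : set (set nat),
    countable H /\ H `<=` F /\ (forall A, F A -> exists2 B, H B & B `<=` A).

Definition kfam (F : set (set nat)) : set (set nat) :=
  [set A | forall B, F B -> A `&` B !=set0].

Definition opene {X : topologicalType} (U : set X) : Prop := open U /\ U !=set0.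

Definition n_T {X : Type} (T : X -> X) (x : X) (U : set X) : set nat :=
  [set n | U (iter n T x)].

Definition N_T {X : Type} (T : X -> X) (U V : set X) : set nat :=
  [set n | U `&` (iter n T @^-1` V) !=set0].

Definition Tran {X : topologicalType} (G : set (set nat)) (T : X -> X) : set X :=
  [set x | forall U : set X, opene U -> G (n_T T x U)].

Definition G_transitive {X : topologicalType} (G : set (set nat)) (T : X -> X) : Prop :=
  forall U V : set X, opene U -> opene V -> G (N_T T U V).

(* The metric space is a pseudometric
   space over a real type which is Hausdorff (hence a metric space). *)
Definition dyn_system {R : realType} (X : pseudoMetricType R) (T : X -> X) : Prop :=
  [/\ hausdorff_space X /\ compact [set: X],
      (exists x y : X, x <> y),
      (forall x : X, ~ open [set x]),
      continuous T & (forall y : X, exists x, T x = y)].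

(* Main.v *)
Require Import Defs.
From HB Require Import structures.
From mathcomp Require Import all_boot all_order all_algebra.
From mathcomp Require Import all_classical all_reals.
From mathcomp Require Import topology normedtype borel_hierarchy.
Set Implicit Arguments. Unset Strict Implicit. Unset Printing Implicit Defensive.
Import Order.TTheory GRing.Theory Num.Theory.
Local Open Scope classical_set_scope.
Local Open Scope ring_scope.

Section S.
Context {R : realType} {X : pseudoMetricType R}.

Lemma baire_step (U : set X) : open U -> dense U ->
  forall p : X * R, exists q : X * R, 0 < p.2 ->
    0 < q.2 /\ ball q.1 (q.2 + q.2) `<=` ball p.1 p.2 `&` U.
Proof.
move=> oU dU [x e]; have [e0|he] := boolP (0 < e); last first.
  by exists (x, e).
have ne : (ball x e)° !=set0.
  exists x; apply: nbhs_singleton; apply: nbhs_interior; exact: nbhsx_ballx.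
have [y [y1 y2]] := dU _ ne (@open_interior _ _).
have : nbhs y ((ball x e)° `&` U).
  by have := openI (@open_interior _ (ball x e)) oU; rewrite openE; apply.
move=> /nbhs_ballP [r r0 hr].
exists (y, r / 2) => _ /=; split; first by rewrite divr_gt0.
move=> z hz; have := hr z; rewrite [X in ball _ X]splitr => /(_ hz) [/interior_subset h1 h2].
by split.
Qed.

Lemma baire_compact (U : nat -> set X) : compact [set: X] ->
  (forall n, open (U n) /\ dense (U n)) -> dense (\bigcap_n U n).
Proof.
move=> cX oU W [w Ww] oW.
have /nbhs_ballP [e e0 hW] : nbhs w W by move: oW; rewrite openE; apply.
have [f0 hf0] := choice (fun np : nat * (X * R) =>
  baire_step (proj1 (oU np.1)) (proj2 (oU np.1)) np.2).
pose f n p := f0 (n, p).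
have hf n p : 0 < p.2 -> 0 < (f n p).2 /\
    ball (f n p).1 ((f n p).2 + (f n p).2) `<=` ball p.1 p.2 `&` U n.
  exact: (hf0 (n, p)).
pose s := fix s n := if n is m.+1 then f m (s m) else (w, e).
have spos n : 0 < (s n).2.
  by elim: n => [//|n ih] /=; have [] := hf n (s n) ih.
have snest n : ball (s n.+1).1 (s n.+1).2 `<=` ball (s n).1 (s n).2 `&` U n.
  have [_ h] := hf n (s n) (spos n).
  move=> z hz; apply: h; move: hz; apply: (@le_ball R X (s n.+1).1).
  by rewrite lerDl; apply: ltW; apply: (spos n.+1).
have snk k m : (k <= m)%N -> ball (s m).1 (s m).2 `<=` ball (s k).1 (s k).2.
  elim: m => [|m ih]; first by rewrite leqn0 => /eqP ->.
  rewrite leq_eqVlt => /orP [/eqP -> //|].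
  by rewrite ltnS => /ih h z /snest [/h].
have smem k m : (k <= m)%N -> ball (s k).1 (s k).2 (s m).1.
  by move=> /snk; apply; apply: ballxx.
have [p [_ cp]] := cX ((fun n => (s n).1) @ \oo) _ filterT.
have pk k : ball (s k).1 (s k).2 p /\ U k p.
  have [|y [y1 y2]] := cp (ball (s k.+1).1 (s k.+1).2) (ball p (s k.+1).2) _
      (nbhsx_ballx _ _ (spos k.+1)).
    by exists k.+1 => // m /= hm; exact: (smem k.+1 m).
  have [_ h] := hf k (s k) (spos k).
  exact: (h p (ball_triangle y1 (ball_sym y2))).
exists p; split; first exact: hW (pk 0%N).1.
by move=> k _; exact: (pk k).2.
Qed.

Lemma net_exists (x0 : X) : compact [set: X] -> exists g : nat -> nat -> X,
  forall U : set X, open U -> U !=set0 ->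
    exists k i, (ball (g k i) k.+1%:R^-1)° `<=` U.
Proof.
move=> cX.
have hk (k : nat) : exists l : seq X, forall y : X,
    exists2 d, d \in l & (ball d k.+1%:R^-1)° y.
  pose F := filter_from [set: seq X] (fun l => [set l' : seq X | {subset l <= l'}]).
  have FF : Filter F.
    apply: filter_from_filter; first by exists [::].
    move=> i j _ _; exists (i ++ j) => // l' /= h; split => z hz; apply: h;
      by rewrite mem_cat hz ?orbT.
  pose P := (fun (l : seq X) (y : X) => exists2 d, d \in l & (ball d k.+1%:R^-1)° y).
  have cov : forall x, [set: X] x -> \forall x' \near x & i \near F, P i x'.
    move=> x _.
    exists ((ball x k.+1%:R^-1)°, [set l' : seq X | {subset [:: x] <= l'}]).
      split => /=; last by exists [:: x].
      by apply: nbhs_interior; apply: nbhsx_ballx; rewrite invr_gt0 ltr0n.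
    move=> [a b] [/= ha hb]; exists x => //; apply: hb.
    by rewrite inE.
  have [l0 _ hl0] := proj1 (compact_near_coveringP [set: X]) cX (seq X) F P FF cov.
  by exists l0 => y; exact: (hl0 l0 (fun z h => h) y I).
have [l hl] := choice hk.
exists (fun k i => nth x0 (l k) i) => U oU [y Uy].
have /nbhs_ballP [e e0 he] : nbhs y U by move: oU; rewrite openE; apply.
have [k hk'] := ltr_add_invr (y:=0) (x:=e/2) ltac:(by rewrite divr_gt0).
rewrite add0r in hk'.
have [d dl hd] := hl k y.
exists k, (index d (l k)); rewrite nth_index //.
move=> z /interior_subset hz; apply: he.
have : ball y (k.+1%:R^-1 + k.+1%:R^-1) z.
  exact: ball_triangle (ball_sym (interior_subset hd)) hz.
apply: le_ball; rewrite [leRHS]splitr; apply: lerD; exact: ltW.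
Qed.

Variable T : X -> X.

Lemma iter_cont : continuous T -> forall n, continuous (iter n T).
Proof.
move=> cT; elim=> [|n ih] x; first exact: cvg_id.
exact: (continuous_comp (ih x) (cT _)).
Qed.

Definition O (V : set X) (B : set nat) := \bigcup_(n in B) (iter n T @^-1` V).

Lemma O_open V B : continuous T -> open V -> open (O V B).
Proof.
move=> cT oV; apply: bigcup_open => n _; apply: open_comp => // x _.
exact: iter_cont.
Qed.

Lemma Tran_T (F : set (set nat)) x : continuous T -> (forall y, exists x, T x = y) ->
  Tran (kfam F) T x -> Tran (kfam F) T (T x).
Proof.
move=> cT sT hx U [oU [y Uy]].
have [z zy] := sT y.
have -> : n_T T (T x) U = n_T T x (T @^-1` U).
  by apply/seteqP; split => n; rewrite /n_T /= -iterSr.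
apply: hx; split; first by apply: open_comp => // ? _; exact: cT.
by exists z; rewrite /= zy.
Qed.

Lemma Tran_iter (F : set (set nat)) x : continuous T -> (forall y, exists x, T x = y) ->
  Tran (kfam F) T x -> forall m, Tran (kfam F) T (iter m T x).
Proof. by move=> cT sT hx; elim=> [//|m ih] /=; apply: Tran_T. Qed.

Lemma dense_trans (F : set (set nat)) :
  dense (Tran (kfam F) T) -> G_transitive (kfam F) T.
Proof.
move=> dT U V [oU U0] oV B FB.
have [y [Uy Ty]] := dT U U0 oU.
have [n [Vn Bn]] := Ty V oV B FB.
by exists n; split => //; exists y.
Qed.

Lemma ne_dense (F : set (set nat)) : continuous T -> (forall y, exists x, T x = y) ->
  Tran (kfam F) T !=set0 -> dense (Tran (kfam F) T).
Proof.
move=> cT sT [x hx] W [w Ww] oW.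
have [[B0 FB0]|F0] := pselect (exists B, F B); last first.
  exists w; split => // U _ B FB; exfalso; apply: F0; by exists B.
have [n [Wn _]] := hx W (conj oW (ex_intro _ w Ww)) B0 FB0.
by exists (iter n T x); split => //; apply: Tran_iter.
Qed.

Lemma rep (F : set (set nat)) (x0 : X) : continuous T -> compact [set: X] ->
  has_countable_base F ->
  exists Fm : nat -> set X, [/\ forall n, open (Fm n),
    (G_transitive (kfam F) T -> forall n, dense (Fm n)) &
    Tran (kfam F) T = \bigcap_n Fm n].
Proof.
move=> cT cX [H [cH [HF Hb]]].
have [[B0 FB0]|F0] := pselect (exists B, F B); last first.
  exists (fun=> setT); split => //.
  - move=> _; exact: openT.
  - by move=> _ _ W W0 _; rewrite setIT.
  apply/seteqP; split => // x _ U _ B FB; exfalso; apply: F0; by exists B.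
have [B1 HB1 _] := Hb B0 FB0.
have /countable_injP [f finj] := cH.
have hh (j : nat) : exists B, H B /\ (forall A, H A -> f A = j -> A = B).
  have [[A [HA fA]]|nA] := pselect (exists A, H A /\ f A = j).
    exists A; split => // A' HA' fA'; apply: finj; rewrite ?inE //.
    by rewrite fA fA'.
  exists B1; split => // A HA fA; exfalso; apply: nA; by exists A.
have [h hh'] := choice hh.
have [g hg] := net_exists x0 cX.
pose V k i := (ball (g k i) k.+1%:R^-1)°.
have oV k i : open (V k i) by exact: open_interior.
have V0 k i : V k i !=set0.
  exists (g k i); apply: nbhs_singleton; apply: nbhs_interior.
  by apply: nbhsx_ballx; rewrite invr_gt0 ltr0n.
pose Fm n := match (unpickle n : option (nat * nat * nat)) with
  | Some (k, i, j) => O (V k i) (h j) | None => setT end.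
exists Fm; split.
- move=> n; rewrite /Fm; case: (unpickle n) => [[[k i] j]|]; last exact: openT.
  exact: O_open.
- move=> tr n; rewrite /Fm; case: (unpickle n) => [[[k i] j]|]; last first.
    by move=> W W0 _; rewrite setIT.
  move=> W W0 oW.
  have [m [[y [Wy Vy]] hm]] := tr W (V k i) (conj oW W0) (conj (oV k i) (V0 k i))
    (h j) (HF _ (hh' j).1).
  by exists y; split => //; exists m.
apply/seteqP; split.
  move=> x hx n _; rewrite /Fm; case: (unpickle n) => [[[k i] j]|//].
  have [m [Vm hm]] := hx (V k i) (conj (oV k i) (V0 k i)) (h j) (HF _ (hh' j).1).
  by exists m.
move=> x hx U [oU U0] B FB.
have [B' HB' B'B] := Hb B FB.
have [k [i VU]] := hg U oU U0.
have := hx (pickle (k, i, f B')) I; rewrite /Fm pickleK.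
have -> : h (f B') = B' by apply/esym/((hh' (f B')).2).
by move=> [m B'm Vm]; exists m; split; [exact: VU|exact: B'B].
Qed.
End S.

Local Close Scope ring_scope.

Theorem proposition3p3 (R : realType) (X : pseudoMetricType R) (T : X -> X)
    (F : set (set nat)) :
  dyn_system T -> is_family F -> has_countable_base F ->
  Gdelta (Tran (kfam F) T) /\
  [/\ (G_transitive (kfam F) T <-> dense (Tran (kfam F) T) /\ Gdelta (Tran (kfam F) T)),
      (dense (Tran (kfam F) T) /\ Gdelta (Tran (kfam F) T) <-> Tran (kfam F) T !=set0) &
      (Tran (kfam F) T !=set0 <-> G_transitive (kfam F) T)].
Proof.
move=> [[_ cX] [x0 _] _ cT sT] _ hb.
have [Fm [oF dF eF]] := rep x0 cT cX hb.
have Gd : Gdelta (Tran (kfam F) T) by exists Fm.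
split => //; split.
- split; last by move=> [/dense_trans].
  move=> tr; split => //; rewrite eF; apply: baire_compact => // n.
  by split; [exact: oF|exact: dF].
- split; first by move=> [dT _]; have [y [_ ?]] := dT setT (ex_intro _ x0 I) openT; exists y.
  by move=> ne; split => //; exact: ne_dense.
- split; first by move=> ne; apply: dense_trans; exact: ne_dense.
  move=> tr; have dT : dense (Tran (kfam F) T).
    rewrite eF; apply: baire_compact => // n.
    by split; [exact: oF|exact: dF].
  by have [y [_ ?]] := dT setT (ex_intro _ x0 I) openT; exists y.
Qed.
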